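(* Let $G$ be a graph with $n$ vertices and maximum degree $\Delta$. Then for every positive integer $q\leq n-\Delta-1$, $\eta(G\lor K_q)=\max\{\eta(G),q\}$.
   Context: All graphs are finite, simple and undirected. $K_q$ is the complete graph on $q$ vertices. For disjoint graphs $G_1,G_2$, the join $G_1\lor G_2$ has vertex set $V(G_1)\cup V(G_2)$ and edge set $E(G_1)\cup E(G_2)\cup\{(u,v):u\in V(G_1),v\in V(G_2)\}$. For a vertex $v$, $N(v)$ is its set of neighbours. For a positive integer $k$, $[k]=\{1,\dots,k\}$. For a labeling $f:V(G)\to[k]$ and $S\subseteq V(G)$, $f(S)=\sum_{u\in S}f(u)$. A labeling $f:V(G)\to[k]$ is an additive $k$-coloring if $f(N(u))\neq f(N(v))$ for every edge $(u,v)$ of $G$. The additive chromatic number $\eta(G)$ is the least $k$ for which $G$ has an additive $k$-coloring. *)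

(* Defs.v *)
From mathcomp Require Import all_boot.
Set Implicit Arguments. Unset Strict Implicit. Unset Printing Implicit Defensive.

Definition simple_graph (V : finType) (e : rel V) : Prop :=
  symmetric e /\ irreflexive e.

Definition deg (V : finType) (e : rel V) (v : V) : nat := #|[set u | e v u]|.
Definition max_deg (V : finType) (e : rel V) : nat := \max_(v : V) deg e v.

Definition join_K (V : finType) (e : rel V) (q : nat) : rel (V + 'I_q)%type :=
  fun x y => match x, y with
             | inl a, inl b => e a b
             | inr i, inr j => i != j
             | _, _ => true
             end.

Arguments join_K {V} e q.

Definition nsum (V : finType) (e : rel V) (f : V -> nat) (v : V) : nat :=
  \sum_(u | e v u) f u.

Definition additive_coloring (V : finType) (e : rel V) (k : nat) (f : V -> nat) : Prop :=
  (forall v, 1 <= f v <= k) /\ (forall u v, e u v -> nsum e f u <> nsum e f v).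

Definition additive_colorable (V : finType) (e : rel V) (k : nat) : Prop :=
  exists f : V -> nat, additive_coloring e k f.

Definition is_eta (V : finType) (e : rel V) (k : nat) : Prop :=
  additive_colorable e k /\ (forall j, additive_colorable e j -> k <= j).

(* Main.v *)
Require Import Defs.
From mathcomp Require Import all_boot.
From mathcomp Require Import zify.

Section H.
Variables (V : finType) (e : rel V) (q : nat) (f : (V + 'I_q)%type -> nat).

Lemma nsum_inl v :
  nsum (join_K e q) f (inl v) = nsum e (fun a => f (inl a)) v + \sum_(i : 'I_q) f (inr i).
Proof. by rewrite /nsum big_sumType. Qed.

Lemma nsum_inr i :
  nsum (join_K e q) f (inr i) + f (inr i) =
  \sum_(a : V) f (inl a) + \sum_(j : 'I_q) f (inr j).
Proof.
rewrite [RHS](_ : _ = \sum_(y : (V + 'I_q)%type) f y); last by rewrite big_sumType.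
rewrite /nsum (bigID (join_K e q (inr i)) predT) /=.
congr (_ + _).
rewrite (eq_bigl (fun y => y == inr i)) ?big_pred1_eq // => y.
case: y => [a|j] //=; rewrite negbK; apply/eqP/eqP => [->|[->]] //.
Qed.
End H.

Theorem mainTheorem4 (V : finType) (e : rel V) (q etaG : nat) :
  simple_graph e ->
  0 < q ->
  q + max_deg e + 1 <= #|V| ->
  is_eta e etaG ->
  is_eta (join_K e q) (maxn etaG q).
Proof.
move=> _ q0 hn [[f [fb fe]] fmin]; split.
- pose g (x : (V + 'I_q)%type) := match x with inl a => f a | inr i => i.+1 end.
  exists g; split.
    case=> [a|i] /=.
      by have := fb a; rewrite leq_max; case/andP=> -> ->.
    by rewrite /= leq_max ltn_ord orbT.
  have cross : forall v (i : 'I_q),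
      nsum (join_K e q) g (inl v) <> nsum (join_K e q) g (inr i).
    move=> v i H.
    have H1 := @nsum_inr _ e q g i; rewrite -H nsum_inl /= in H1.
    have H2 : nsum e f v + i.+1 = \sum_a f a.
      move: H1; rewrite /g /= (_ : nsum e [eta f] v = nsum e f v) //; lia.
    move: H2; rewrite (bigID (e v) predT) /= -/(nsum e f v).
    have : #|[predC e v]| <= \sum_(a | ~~ e v a) f a.
      rewrite -sum1_card; apply: leq_sum => a _; by case/andP: (fb a).
    have hc := cardC (e v).
    have hd : #|e v| <= max_deg e.
      have := @leq_bigmax _ (fun v => deg e v) v.
      by rewrite /max_deg /deg cardsE.
    have hi := ltn_ord i.
    lia.
  case=> [a|i] [b|j] //= hab.
  + rewrite !nsum_inl /=; move=> H; apply: (fe a b hab); move: H; have E : forall x, nsum e [eta f] x = nsum e f x by []; rewrite /g /= !E; lia.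
  + first [exact: cross | move=> H; exact: (cross _ _ (esym H))].
  + have h1 := @nsum_inr _ e q g i; have h2 := @nsum_inr _ e q g j; simpl in h1, h2.
    move=> H; move: hab; have : i = j :> nat by lia.
    by move/val_inj => ->; rewrite eqxx.
- move=> k [g [gb ge]]; rewrite geq_max; apply/andP; split.
    apply: fmin; exists (fun a => g (inl a)); split => // a b hab H.
    apply: (ge (inl a) (inl b) hab); by rewrite !nsum_inl H.
  have hk : forall i : 'I_q, (g (inr i)).-1 < k.
    by move=> i; case/andP: (gb (inr i)) => h1 h2; lia.
  pose h (i : 'I_q) : 'I_k := Ordinal (hk i).
  have hinj : injective h.
    move=> i j /(congr1 val) /= hij; apply/eqP; apply/negPn/negP => hne.
    have h1 := @nsum_inr _ e q g i; have h2 := @nsum_inr _ e q g j.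
    have := ge (inr i) (inr j) hne.
    case/andP: (gb (inr i)) => ? _; case/andP: (gb (inr j)) => ? _.
    move=> H; apply: H; apply/eqP; rewrite -(eqn_add2r (g (inr i))) h1 (_ : g (inr i) = g (inr j)) ?h2 //; lia.
  by have := leq_card h hinj; rewrite !card_ord.
Qed.
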